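(* Let $\mathbb{R}^4_+ := \{x \in \mathbb{R}^4 : x_2^2 + x_3^2 + x_4^2 \le 2x_1x_2,\ x_1 \ge 0\}$ and let $A$ be the block diagonal matrix with rows $(0,1,0,0),(0,0,0,0),(0,0,0,4\pi),(0,0,-\pi,0)$. Identifying $(\mathbb{R}^4)'$ with $\mathbb{R}^4$ via the standard inner product, the dual cone is $\{x : x_3^2 + x_4^2 \le x_1^2 + 2x_1x_2,\ x_1\ge -x_2\}$, and both $(e^{tA})_{t\ge0}$ (with respect to $\mathbb{R}^4_+$) and its dual semigroup $(e^{tA^T})_{t\ge0}$ (with respect to the dual cone) are individually eventually nonnegative, while $(e^{tA})_{t\ge0}$ is not uniformly eventually nonnegative.
   Context: For a finite-dimensional real vector space $X$ ordered by a closed cone $X_+$ with non-empty interior and $A: X\to X$ linear, $(e^{tA})_{t\ge0}$ is individually eventually nonnegative if for each $x\in X_+$ there is $t_0\ge0$ with $e^{tA}x\in X_+$ for all $t\ge t_0$; uniformly eventually nonnegative if there is $t_0\ge0$ with $e^{tA}X_+\subseteq X_+$ for all $t\ge t_0$. The dual cone is $X'_+ := \{x' : \langle x', x\rangle\ge0\ \forall x\in X_+\}$. *)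

(* Defs.v *)
From HB Require Import structures.
From mathcomp Require Import all_boot all_order all_algebra.
From mathcomp Require Import all_classical all_reals all_analysis.
Set Implicit Arguments. Unset Strict Implicit. Unset Printing Implicit Defensive.
Import Order.TTheory GRing.Theory Num.Theory.
Local Open Scope classical_set_scope.
Local Open Scope ring_scope.

Definition mexp (R : realType) (n : nat) (M : 'M[R]_n) : 'M[R]_n :=
  \matrix_(i, j) limn (fun N : nat => \sum_(k < N) ((k`!)%:R^-1 * (M ^+ k) i j)).

Definition ip (R : realType) (n : nat) (y x : 'cV[R]_n) : R := \sum_i y i 0 * x i 0.

Definition dual_cone (R : realType) (n : nat) (C : set 'cV[R]_n) : set 'cV[R]_n :=
  [set y | forall x, C x -> 0 <= ip y x].

Definition indiv_ev_nonneg (R : realType) (n : nat) (C : set 'cV[R]_n) (A : 'M[R]_n) :=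
  forall x, C x -> exists t0 : R, 0 <= t0 /\
    forall t : R, t0 <= t -> C (mexp (t *: A) *m x).

Definition unif_ev_nonneg (R : realType) (n : nat) (C : set 'cV[R]_n) (A : 'M[R]_n) :=
  exists t0 : R, 0 <= t0 /\
    forall t : R, t0 <= t -> forall x, C x -> C (mexp (t *: A) *m x).

(* Coordinates x_1..x_4 of the paper are entries 0..3 here. *)
Definition K4 (R : realType) : set 'cV[R]_4 :=
  [set x | (x 1 0) ^+ 2 + (x 2 0) ^+ 2 + (x 3 0) ^+ 2 <= 2 * x 0 0 * x 1 0
           /\ 0 <= x 0 0].

Definition K4dual (R : realType) : set 'cV[R]_4 :=
  [set x | (x 2 0) ^+ 2 + (x 3 0) ^+ 2 <= (x 0 0) ^+ 2 + 2 * x 0 0 * x 1 0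
           /\ - x 1 0 <= x 0 0].

Definition A4 (R : realType) : 'M[R]_4 :=
  \matrix_(i < 4, j < 4)
    (if (i == 0 :> nat) && (j == 1 :> nat) then 1
     else if (i == 2 :> nat) && (j == 3 :> nat) then 4 * pi
     else if (i == 3 :> nat) && (j == 2 :> nat) then - pi
     else 0).

Arguments K4 R : clear implicits.
Arguments K4dual R : clear implicits.
Arguments A4 R : clear implicits.

(* Main.v *)
Require Import Defs.
From HB Require Import structures.
From mathcomp Require Import all_boot all_order all_algebra.
From mathcomp Require Import all_classical all_reals all_analysis.
From mathcomp Require Import ring lra.
Import Order.TTheory GRing.Theory Num.Theory.
Import numFieldNormedType.Exports.
Local Open Scope classical_set_scope.
Local Open Scope ring_scope.
Definition cc {R : realType} (th : R) (k : nat) : R :=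
  (~~ odd k)%:R * (-1) ^+ k./2 * th ^+ k.
Definition ss {R : realType} (th : R) (k : nat) : R :=
  (odd k)%:R * (-1) ^+ k.-1./2 * th ^+ k.

Lemma cs_step {R : realType} (th : R) (k : nat) :
  cc th k.+1 = - th * ss th k /\ ss th k.+1 = th * cc th k.
Proof.
rewrite /cc /ss; rewrite -[k]odd_double_half.
case: (odd k) => /=; move: (k./2) => m; rewrite add0n /= ?odd_double ?doubleK ?uphalf_double /=;
  split; rewrite ?exprS; ring.
Qed.
Lemma ord4 (i : 'I_4) : i = 0 \/ i = 1 \/ i = 2 \/ i = 3.
Proof.
case: i => [[|[|[|[|m]]]] H].
- by left; apply: val_inj.
- by right; left; apply: val_inj.
- by right; right; left; apply: val_inj.
- by right; right; right; apply: val_inj.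
- by [].
Qed.

Lemma sum4 {R : realType} (f : 'I_4 -> R) : \sum_i f i = f 0 + f 1 + f 2 + f 3.
Proof.
rewrite !big_ord_recl big_ord0 addr0 !addrA; congr (_ + _ + _ + _); congr f; exact: val_inj.
Qed.

Definition Qm {R : realType} (t : R) (k : nat) : 'M[R]_4 :=
  \matrix_(i < 4, j < 4)
   (if (i == 0 :> nat) && (j == 0 :> nat) then (k == 0)%:R
    else if (i == 0 :> nat) && (j == 1 :> nat) then t * (k == 1)%:R
    else if (i == 1 :> nat) && (j == 1 :> nat) then (k == 0)%:R
    else if (i == 2 :> nat) && (j == 2 :> nat) then cc (2 * pi * t) k
    else if (i == 2 :> nat) && (j == 3 :> nat) then 2 * ss (2 * pi * t) k
    else if (i == 3 :> nat) && (j == 2 :> nat) then - (ss (2 * pi * t) k / 2)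
    else if (i == 3 :> nat) && (j == 3 :> nat) then cc (2 * pi * t) k
    else 0).

Lemma Qpow {R : realType} (t : R) (k : nat) : (t *: A4 R) ^+ k = Qm t k.
Proof.
elim: k => [|k IH].
  rewrite expr0; apply/matrixP => i j.
  have [->|[->|[->|->]]] := ord4 i; have [->|[->|[->|->]]] := ord4 j;
   rewrite !mxE /= /cc /ss /=; ring.
rewrite exprSr IH; apply/matrixP => i j.
have [c1 s1] := cs_step (2 * pi * t) k.
have [->|[->|[->|->]]] := ord4 i; have [->|[->|[->|->]]] := ord4 j;
   rewrite !mxE sum4 !mxE /= ?c1 ?s1; try ring; by field.
Qed.
Definition Em {R : realType} (t : R) : 'M[R]_4 :=
  \matrix_(i < 4, j < 4)
   (if (i == 0 :> nat) && (j == 0 :> nat) then 1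
    else if (i == 0 :> nat) && (j == 1 :> nat) then t
    else if (i == 1 :> nat) && (j == 1 :> nat) then 1
    else if (i == 2 :> nat) && (j == 2 :> nat) then cos (2 * pi * t)
    else if (i == 2 :> nat) && (j == 3 :> nat) then 2 * sin (2 * pi * t)
    else if (i == 3 :> nat) && (j == 2 :> nat) then - (sin (2 * pi * t) / 2)
    else if (i == 3 :> nat) && (j == 3 :> nat) then cos (2 * pi * t)
    else 0).

Lemma Lentry {R : realType} (f g : nat -> R) (a l v : R) :
  (forall k, (k`!%:R)^-1 * f k = a * g k) -> series g @ \oo --> l -> v = a * l ->
  limn (fun N : nat => \sum_(k < N) ((k`!)%:R^-1 * f k)) = v.
Proof.
move=> fg cv ->; apply: cvg_lim; first exact: Rhausdorff.
have -> : (fun N : nat => \sum_(k < N) ((k`!)%:R^-1 * f k)) = (fun N => a * series g N).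
  apply/funext => N; rewrite /series /= big_mkord mulr_sumr; apply: eq_bigr => k _; exact: fg.
exact: cvgMl_tmp.
Qed.

Lemma cvg_cos {R : realType} (x : R) : series (cos_coeff x) @ \oo --> cos x.
Proof. rewrite cos.unlock; exact: is_cvg_series_cos_coeff. Qed.

Lemma cvg_sin {R : realType} (x : R) : series (sin_coeff x) @ \oo --> sin x.
Proof. rewrite sin.unlock; exact: is_cvg_series_sin_coeff. Qed.

Lemma cvg_d0 {R : realType} : series (fun k => (k == 0)%:R : R) @ \oo --> (1 : R).
Proof.
apply: cvg_near_cst; exists 1%N => // -[//|n] _ /=.
rewrite /series /= big_nat_recl //= big1 ?addr0 // => i _; by [].
Qed.

Lemma cvg_d1 {R : realType} : series (fun k => (k == 1)%:R : R) @ \oo --> (1 : R).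
Proof.
apply: cvg_near_cst; exists 2%N => // -[//|[//|n]] _ /=.
rewrite /series /= big_nat_recl //= big_nat_recl //= big1 ?addr0 ?add0r // => i _; by [].
Qed.
Lemma mexpA {R : realType} (t : R) : mexp (t *: A4 R) = Em t.
Proof.
apply/matrixP => i j; rewrite /mexp mxE.
have -> : (fun N : nat => \sum_(k < N) ((k`!)%:R^-1 * ((t *: A4 R) ^+ k) i j)) =
          (fun N : nat => \sum_(k < N) ((k`!)%:R^-1 * Qm t k i j)).
  by apply/funext => N; apply: eq_bigr => k _; rewrite Qpow.
have Z : forall (f : nat -> R), (forall k, f k = 0) -> 
   limn (fun N : nat => \sum_(k < N) ((k`!)%:R^-1 * f k)) = 0.
  move=> f f0; apply: (@Lentry _ f (cos_coeff 0) 0 (cos 0)); last by rewrite mul0r.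
  - by move=> k; rewrite f0 mulr0 mul0r.
  - exact: cvg_cos.
have [->|[->|[->|->]]] := ord4 i; have [->|[->|[->|->]]] := ord4 j; rewrite [RHS]mxE /=;
  try (by apply: (Z (fun k => Qm t k _ _)) => k; rewrite mxE).
- apply: (@Lentry _ (fun k => Qm t k 0 0) _ 1 _ _ _ cvg_d0); last by rewrite mulr1.
  by move=> k; rewrite mxE /=; case: k => [|k] /=; rewrite ?mulr0 ?invr1 ?mul1r.
- apply: (@Lentry _ (fun k => Qm t k 0 1) _ t _ _ _ cvg_d1); last by rewrite mulr1.
  by move=> k; rewrite mxE /=; case: k => [|[|k]] /=; rewrite ?mulr0 ?invr1 ?mul1r // mulrC.
- apply: (@Lentry _ (fun k => Qm t k 1 1) _ 1 _ _ _ cvg_d0); last by rewrite mulr1.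
  by move=> k; rewrite mxE /=; case: k => [|k] /=; rewrite ?mulr0 ?invr1 ?mul1r.
- apply: (@Lentry _ (fun k => Qm t k 2 2) _ 1 _ _ _ (cvg_cos _)); last by rewrite mul1r.
  by move=> k; rewrite mxE /= /cc /cos_coeff /= -exprnP; ring.
- apply: (@Lentry _ (fun k => Qm t k 2 3) _ 2 _ _ _ (cvg_sin _)); last by [].
  by move=> k; rewrite mxE /= /ss /sin_coeff /= -?exprnP; move: ((-1 : R) ^+ k.-1./2) => e; ring.
- apply: (@Lentry _ (fun k => Qm t k 3 2) _ (- 2^-1) _ _ _ (cvg_sin _)); last by rewrite mulNr mulrC.
  by move=> k; rewrite mxE /= /ss /sin_coeff /= -?exprnP; move: ((-1 : R) ^+ k.-1./2) => e; ring.
- apply: (@Lentry _ (fun k => Qm t k 3 3) _ 1 _ _ _ (cvg_cos _)); last by rewrite mul1r.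
  by move=> k; rewrite mxE /= /cc /cos_coeff /= -?exprnP; ring.
Qed.
Lemma powT {R : realType} (t : R) (M : 'M[R]_4) (k : nat) :
  (t *: M^T) ^+ k = ((t *: M) ^+ k)^T.
Proof.
elim: k => [|k IH]; first by rewrite !expr0 trmx1.
rewrite exprSr IH exprS -!mulmxE trmx_mul; congr (_ *m _); apply/matrixP => a b; by rewrite !mxE.
Qed.

Lemma mexpT {R : realType} (t : R) (M : 'M[R]_4) :
  mexp (t *: M^T) = (mexp (t *: M))^T.
Proof.
apply/matrixP => i j; rewrite /mexp !mxE.
have -> : (fun N : nat => \sum_(k < N) ((k`!)%:R^-1 * ((t *: M^T) ^+ k) i j)) =
          (fun N : nat => \sum_(k < N) ((k`!)%:R^-1 * ((t *: M) ^+ k) j i)).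
  by apply/funext => N; apply: eq_bigr => k _; rewrite powT mxE.
by [].
Qed.
Definition v4 {R : realType} (a b c d : R) : 'cV[R]_4 := \col_(i < 4) [:: a; b; c; d]`_i.

Lemma v4E {R : realType} (a b c d : R) :
  v4 a b c d 0 0 = a /\ v4 a b c d 1 0 = b /\ v4 a b c d 2 0 = c /\ v4 a b c d 3 0 = d.
Proof. by rewrite !mxE. Qed.

Lemma EmxE {R : realType} (t : R) (x : 'cV[R]_4) :
  let c := cos (2 * pi * t) in let s := sin (2 * pi * t) in
  (Em t *m x) 0 0 = x 0 0 + t * x 1 0 /\ (Em t *m x) 1 0 = x 1 0 /\
  (Em t *m x) 2 0 = c * x 2 0 + 2 * s * x 3 0 /\
  (Em t *m x) 3 0 = - (s / 2) * x 2 0 + c * x 3 0.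
Proof. rewrite /= !mxE !sum4 !mxE /=; split; [|split; [|split]]; ring. Qed.

Lemma EmTxE {R : realType} (t : R) (x : 'cV[R]_4) :
  let c := cos (2 * pi * t) in let s := sin (2 * pi * t) in
  ((Em t)^T *m x) 0 0 = x 0 0 /\ ((Em t)^T *m x) 1 0 = t * x 0 0 + x 1 0 /\
  ((Em t)^T *m x) 2 0 = c * x 2 0 - s / 2 * x 3 0 /\
  ((Em t)^T *m x) 3 0 = 2 * s * x 2 0 + c * x 3 0.
Proof. rewrite /= !mxE !sum4 !mxE /=; split; [|split; [|split]]; ring. Qed.

Lemma ipE {R : realType} (y x : 'cV[R]_4) :
  ip y x = y 0 0 * x 0 0 + y 1 0 * x 1 0 + y 2 0 * x 2 0 + y 3 0 * x 3 0.
Proof. by rewrite /ip sum4. Qed.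

Lemma rot_bound {R : realType} (th a b : R) :
  (cos th * a + 2 * sin th * b) ^+ 2 + (- (sin th / 2) * a + cos th * b) ^+ 2
   <= 4 * (a ^+ 2 + b ^+ 2).
Proof.
have h := cos2Dsin2 th.
set c := cos th in h *; set s := sin th in h *.
have e : (c * a + 2 * s * b) ^+ 2 + 4 * (- (s / 2) * a + c * b) ^+ 2 = a ^+ 2 + 4 * b ^+ 2.
  apply/eqP; rewrite -subr_eq0; apply/eqP.
  have -> : (c * a + 2 * s * b) ^+ 2 + 4 * (- (s / 2) * a + c * b) ^+ 2 - (a ^+ 2 + 4 * b ^+ 2)
     = (c ^+ 2 + s ^+ 2 - 1) * (a ^+ 2 + 4 * b ^+ 2) by field.
  by rewrite h subrr mul0r.
move: e; move: (c * a + 2 * s * b) (- (s / 2) * a + c * b) => P Q e.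
have := sqr_ge0 Q; have := sqr_ge0 a; lra.
Qed.

Lemma rot_boundT {R : realType} (th a b : R) :
  (cos th * a - sin th / 2 * b) ^+ 2 + (2 * sin th * a + cos th * b) ^+ 2
   <= 4 * (a ^+ 2 + b ^+ 2).
Proof.
have h := cos2Dsin2 th.
set c := cos th in h *; set s := sin th in h *.
have e : 4 * (c * a - s / 2 * b) ^+ 2 + (2 * s * a + c * b) ^+ 2 = 4 * a ^+ 2 + b ^+ 2.
  apply/eqP; rewrite -subr_eq0; apply/eqP.
  have -> : 4 * (c * a - s / 2 * b) ^+ 2 + (2 * s * a + c * b) ^+ 2 - (4 * a ^+ 2 + b ^+ 2)
     = (c ^+ 2 + s ^+ 2 - 1) * (4 * a ^+ 2 + b ^+ 2) by field.
  by rewrite h subrr mul0r.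
move: e; move: (c * a - s / 2 * b) (2 * s * a + c * b) => P Q e.
have := sqr_ge0 P; have := sqr_ge0 b; lra.
Qed.
Lemma cs3 {R : realType} (a b v1 v2 v3 w1 w2 w3 : R) :
  0 <= a -> 0 <= b -> v1 ^+ 2 + v2 ^+ 2 + v3 ^+ 2 <= a ^+ 2 ->
  w1 ^+ 2 + w2 ^+ 2 + w3 ^+ 2 <= b ^+ 2 ->
  0 <= a * b + (v1 * w1 + v2 * w2 + v3 * w3).
Proof.
move=> a0 b0 hv hw.
have HL : (v1 * w1 + v2 * w2 + v3 * w3) ^+ 2 <=
         (v1 ^+ 2 + v2 ^+ 2 + v3 ^+ 2) * (w1 ^+ 2 + w2 ^+ 2 + w3 ^+ 2).
  have -> : (v1 ^+ 2 + v2 ^+ 2 + v3 ^+ 2) * (w1 ^+ 2 + w2 ^+ 2 + w3 ^+ 2) =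
    (v1 * w1 + v2 * w2 + v3 * w3) ^+ 2 + ((v1 * w2 - v2 * w1) ^+ 2 + (v1 * w3 - v3 * w1) ^+ 2
      + (v2 * w3 - v3 * w2) ^+ 2) by ring.
  by rewrite lerDl !addr_ge0 ?sqr_ge0.
have HM : (v1 ^+ 2 + v2 ^+ 2 + v3 ^+ 2) * (w1 ^+ 2 + w2 ^+ 2 + w3 ^+ 2) <= (a * b) ^+ 2.
  rewrite exprMn; apply: ler_pM => //; rewrite ?addr_ge0 ?sqr_ge0 //.
have ab0 : 0 <= a * b by rewrite mulr_ge0.
move: HL HM ab0; move: (v1 * w1 + v2 * w2 + v3 * w3) (a * b) => d p HL HM p0.
have N := le_trans HL HM.
nra.
Qed.

Lemma dual_eq {R : realType} : dual_cone (K4 R) = K4dual R.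
Proof.
rewrite eqEsubset; split => y /=.
- move=> H.
  have Ha : 0 <= y 0 0 + y 1 0.
    have Hx : K4 R (v4 1 1 0 0).
      rewrite /K4 /=; have [-> [-> [-> ->]]] := v4E (1 : R) 1 0 0; split; lra.
    have := H _ Hx; rewrite ipE; have [-> [-> [-> ->]]] := v4E (1 : R) 1 0 0.
    lra.
  set a := y 0 0 + y 1 0 in Ha.
  set q := y 1 0 ^+ 2 + y 2 0 ^+ 2 + y 3 0 ^+ 2.
  suff hq : q <= a ^+ 2.
    by rewrite /q /a in hq Ha; split; nra.
  have q0 : 0 <= q by rewrite /q !addr_ge0 ?sqr_ge0.
  have T : forall s, 0 <= s -> q <= s ^+ 2 -> 0 <= a * s - q.
    move=> s s0 hs.
    have Hx : K4 R (v4 s (s - y 1 0) (- y 2 0) (- y 3 0)).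
      rewrite /K4 /=; have [-> [-> [-> ->]]] := v4E s (s - y 1 0) (- y 2 0) (- y 3 0).
      rewrite /q in hs; split; nra.
    have := H _ Hx; rewrite ipE; have [-> [-> [-> ->]]] := v4E s (s - y 1 0) (- y 2 0) (- y 3 0).
    rewrite /a /q; nra.
  have [a0|apos] := eqVneq a 0.
  + have := T ((q + 1) / 2); rewrite a0 mul0r sub0r expr0n /=.
    have h1 : 0 <= (q + 1) / 2 by rewrite divr_ge0 // addr_ge0.
    have h2 : q <= ((q + 1) / 2) ^+ 2.
      have -> : ((q + 1) / 2) ^+ 2 = q + (q - 1) ^+ 2 / 4 by field.
      by rewrite lerDl divr_ge0 ?sqr_ge0.
    move=> /(_ h1 h2); lra.
  + have ap : 0 < a by rewrite lt_def apos Ha.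
    set s := (q + a ^+ 2) / (2 * a).
    have hs : 2 * a * s = q + a ^+ 2 by rewrite /s; field; rewrite apos.
    have hs2 : 4 * a ^+ 2 * s ^+ 2 = (q + a ^+ 2) ^+ 2 by rewrite -hs; ring.
    have s0 : 0 <= s by rewrite /s divr_ge0 ?addr_ge0 ?sqr_ge0 ?mulr_ge0 // ltW.
    have a2 : 0 < a ^+ 2 by rewrite exprn_gt0.
    have hq : q <= s ^+ 2.
      have := sqr_ge0 (q - a ^+ 2); nra.
    have := T s s0 hq; nra.
- move=> [hy1 hy2] x [hx1 hx2]; rewrite ipE.
  have := @cs3 R (y 0 0 + y 1 0) (x 0 0) (y 1 0) (y 2 0) (y 3 0) (x 1 0 - x 0 0) (x 2 0) (x 3 0).
  have e : y 0 0 * x 0 0 + y 1 0 * x 1 0 + y 2 0 * x 2 0 + y 3 0 * x 3 0 =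
    (y 0 0 + y 1 0) * x 0 0 + (y 1 0 * (x 1 0 - x 0 0) + y 2 0 * x 2 0 + y 3 0 * x 3 0) by ring.
  rewrite e; apply; [lra | lra | nra | nra].
Qed.
Lemma indivK4 {R : realType} : indiv_ev_nonneg (K4 R) (A4 R).
Proof.
move=> x [hx1 hx2].
have p0 : 0 <= x 1 0 by nra.
set r := x 2 0 ^+ 2 + x 3 0 ^+ 2.
have r0 : 0 <= r by rewrite /r addr_ge0 ?sqr_ge0.
exists (2 * r / x 1 0 ^+ 2); split.
  by rewrite divr_ge0 ?sqr_ge0 ?mulr_ge0.
move=> t ht.
have t0 : 0 <= t by apply: le_trans ht; rewrite divr_ge0 ?sqr_ge0 ?mulr_ge0.
have key : 2 * r <= t * x 1 0 ^+ 2.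
  have [p00|pn0] := eqVneq (x 1 0) 0.
    have : r <= 0 by rewrite /r; move: hx1; rewrite p00; lra.
    rewrite p00 expr0n /= mulr0; lra.
  have pp : 0 < x 1 0 ^+ 2 by rewrite exprn_gt0 // lt_def pn0 p0.
  by rewrite -ler_pdivrMr.
rewrite mexpA; have [e0 [e1 [e2 e3]]] := EmxE t x.
rewrite /K4 /= e0 e1 e2 e3.
have rb := rot_bound (2 * pi * t) (x 2 0) (x 3 0).
rewrite -/r in rb; split; nra.
Qed.

Lemma indivDual {R : realType} : indiv_ev_nonneg (dual_cone (K4 R)) (A4 R)^T.
Proof.
rewrite dual_eq => y [hy1 hy2].
have p0 : 0 <= y 0 0 by nra.
set r := y 2 0 ^+ 2 + y 3 0 ^+ 2.
have r0 : 0 <= r by rewrite /r addr_ge0 ?sqr_ge0.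
have w0 : 0 <= 4 * r + y 0 0 * (y 1 0 ^+ 2 + 1) by rewrite addr_ge0 ?mulr_ge0 ?addr_ge0 ?sqr_ge0.
exists ((4 * r + y 0 0 * (y 1 0 ^+ 2 + 1)) / y 0 0 ^+ 2); split.
  by rewrite divr_ge0 ?sqr_ge0.
move=> t ht.
have t0 : 0 <= t by apply: le_trans ht; rewrite divr_ge0 ?sqr_ge0.
rewrite mexpT mexpA; have [e0 [e1 [e2 e3]]] := EmTxE t y.
rewrite /K4dual /= e0 e1 e2 e3.
have rb := rot_boundT (2 * pi * t) (y 2 0) (y 3 0).
rewrite -/r in rb.
have [p00|pn0] := eqVneq (y 0 0) 0.
  have : r <= 0 by rewrite /r; move: hy1; rewrite p00; lra.
  move: rb hy2; rewrite p00; split; nra.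
have pp : 0 < y 0 0 ^+ 2 by rewrite exprn_gt0 // lt_def pn0 p0.
have key : 4 * r + y 0 0 * (y 1 0 ^+ 2 + 1) <= t * y 0 0 ^+ 2 by rewrite -ler_pdivrMr.
have yp : 0 < y 0 0 by rewrite lt_def pn0 p0.
have k2 : y 1 0 ^+ 2 + 1 <= t * y 0 0.
  have : y 0 0 * (y 1 0 ^+ 2 + 1) <= y 0 0 * (t * y 0 0) by nra.
  by rewrite ler_pM2l.
split; nra.
Qed.
Lemma notunif {R : realType} : ~ unif_ev_nonneg (K4 R) (A4 R).
Proof.
move=> [t0 [t00 H]].
have [n hn] : exists n : nat, t0 <= n%:R.
  by exists (Num.bound t0); apply: ltW; apply: archi_boundP.
set t : R := n%:R + 4^-1.
have q4 : (0:R) < 4^-1 by rewrite invr_gt0.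
have ht : t0 <= t by rewrite /t; lra.
have tpos : 0 <= t by lra.
have eth : 2 * pi * t = pi / 2 + (pi *+ 2) *+ n.
  by rewrite /t -mulrnA -mulr_natr; field.
have hc : cos (2 * pi * t) = 0 by rewrite eth (periodicn (@cosD2pi R)) cos_pihalf.
have hs : sin (2 * pi * t) = 1 by rewrite eth (periodicn (@sinD2pi R)) sin_pihalf.
set s := (t + 1)^-1.
have ts : (t + 1) * s = 1 by rewrite /s mulfV //; apply/eqP => e; lra.
have sp : 0 < s by rewrite /s invr_gt0; lra.
have Hx : K4 R (v4 (t + 1) s 0 1).
  rewrite /K4 /=; have [-> [-> [-> ->]]] := v4E (t + 1) s 0 1; split; nra.
have := H t ht _ Hx; rewrite mexpA; have [e0 [e1 [e2 e3]]] := EmxE t (v4 (t + 1) s 0 1).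
rewrite /K4 /= e0 e1 e2 e3 hc hs; have [-> [-> [-> ->]]] := v4E (t + 1) s 0 1.
move=> [h _].
have ets : t * s = 1 - s by nra.
have e : 2 * (t + 1 + t * s) * s = 2 + 2 * (1 - s) * s.
  have -> : 2 * (t + 1 + t * s) * s = 2 * ((t + 1) * s) + 2 * (t * s) * s by ring.
  by rewrite ts ets mulr1.
move: h; rewrite e; nra.
Qed.

Theorem mainTheorem6 (R : realType) :
  dual_cone (K4 R) = K4dual R /\
  indiv_ev_nonneg (K4 R) (A4 R) /\
  indiv_ev_nonneg (dual_cone (K4 R)) (A4 R)^T /\
  ~ unif_ev_nonneg (K4 R) (A4 R).
Proof.
split; first exact: dual_eq.
split; first exact: indivK4.
split; first exact: indivDual.
exact: notunif.
Qed.
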